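(* Let $b<1/2$, $c>0$, and let $f$ be a real-valued function on $[1,\infty)$ with $f(x)\le c\,x^b$ for all $x\ge 1$. Then there is a constant $C$ depending only on $c$ and $b$ such that for every integer $N\ge 2$, $$ \sum_{1\le j\le \pi(N)} p_j^{-1/2} f(N/p_j) \le \frac{C\,N^{1/2}}{\log N}, $$ where $p_1=2<p_2<\dots$ is the increasing sequence of all primes and $\pi(N)$ is the number of primes $\le N$. *)

(* Defs.v *)
From HB Require Import structures.
From mathcomp Require Import all_boot all_order all_algebra.
From mathcomp Require Import all_classical all_reals all_analysis.
Set Implicit Arguments. Unset Strict Implicit. Unset Printing Implicit Defensive.

(* Main.v *)
Require Import Defs.
From HB Require Import structures.
From mathcomp Require Import all_boot all_order all_algebra.
From mathcomp Require Import all_classical all_reals all_analysis.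
From mathcomp Require Import ring lra zify.

Lemma prodP_recr m n (P : pred nat) (F : nat -> nat) : m <= n ->
  \prod_(m <= i < n.+1 | P i) F i =
  if P n then (\prod_(m <= i < n | P i) F i) * F n else \prod_(m <= i < n | P i) F i.
Proof.
move=> mn; rewrite big_mkcond big_nat_recr //= -big_mkcond.
by case: (P n); rewrite ?muln1.
Qed.

Lemma prime_ndvd_fact p k : prime p -> k < p -> ~~ (p %| k`!).
Proof.
move=> pp; elim: k => [|k IH] lt; first by rewrite dvdn1; case: eqP pp => // ->.
rewrite factS Euclid_dvdM // negb_or IH ?(ltnW lt) // andbT.
by apply/negP => /dvdn_leq => /(_ isT); rewrite leqNgt lt.
Qed.

Lemma coprime_prod_primes a k q : prime q -> k <= q ->
  coprime (\prod_(a <= p < k | prime p) p) q.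
Proof.
move=> pq; elim: k => [|k IH] le; first by rewrite big_geq // coprime1n.
have [ak|ka] := leqP a k; last by rewrite big_geq ?coprime1n.
rewrite prodP_recr //; case: ifP => pk; last exact: IH (ltnW le).
rewrite coprimeMl IH ?(ltnW le) //= prime_coprime // dvdn_prime2 //.
by rewrite neq_ltn le.
Qed.

Lemma prod_dvd_bin m k : m.+2 <= k -> k <= (2 * m).+2 ->
  \prod_(m.+2 <= p < k | prime p) p %| 'C((2 * m).+1, m).
Proof.
elim: k => [//|k IH] lo hi.
have [ek|lk] := eqVneq k m.+1.
  by rewrite ek big_geq ?dvd1n.
have lo' : m.+2 <= k by rewrite ltn_neqAle eq_sym lk -ltnS lo.
rewrite prodP_recr //; case: ifP => pk; last exact: IH (ltnW hi).
rewrite Gauss_dvd ?coprime_prod_primes // IH ?(ltnW hi) //=.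
have hb := @bin_fact (2 * m).+1 m (leq_trans (leq_pmull m (isT : 0 < 2)) (leqnSn _)).
have : k %| 'C((2 * m).+1, m) * (m`! * ((2 * m).+1 - m)`!).
  by rewrite hb dvdn_fact // prime_gt0.
rewrite Euclid_dvdM // Euclid_dvdM // => /orP[//|/orP[] H]; exfalso; move: H; apply/negP.
  by apply: prime_ndvd_fact => //; apply: leq_trans lo'.
apply: prime_ndvd_fact => //.
have -> : (2 * m).+1 - m = m.+1 by rewrite mul2n -addnn -addnS addKn.
exact: leq_ltn_trans lo'.
Qed.

Lemma bin_mid_le m : 'C((2 * m).+1, m) <= 4 ^ m.
Proof.
have h := expnDn 1 1 (2 * m).+1.
have : 'C((2 * m).+1, m) + 'C((2 * m).+1, m.+1) <= 2 ^ (2 * m).+1.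
  rewrite h -(big_mkord xpredT (fun i => 'C((2 * m).+1, i) * (1 ^ ((2 * m).+1 - i) * 1 ^ i))).
  rewrite (@big_cat_nat _ _ _ m) //=; last lia.
  rewrite [X in _ <= _ + X]big_ltn; last lia.
  rewrite [X in _ <= _ + (_ + X)]big_ltn; last lia.
  rewrite !exp1n !muln1; lia.
have -> : 'C((2 * m).+1, m.+1) = 'C((2 * m).+1, m).
  rewrite -[in RHS]bin_sub; last by lia.
  by congr binomial; lia.
by rewrite addnn -mul2n expnS (_ : 4 = 2 ^ 2) // -expnM leq_pmul2l.
Qed.

Lemma prod_primes_le n : \prod_(0 <= p < n.+1 | prime p) p <= 4 ^ n.
Proof.
elim: n {-2}n (leqnn n) => [|N IH] n le.
  by move: le; rewrite leqn0 => /eqP ->; rewrite big_mkcond big_nat1.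
have [ln|] := leqP n N; first exact: IH.
move=> lt; have {lt le}-> : n = N.+1 by apply/eqP; rewrite eqn_leq le.
case/boolP: (odd N.+1) => ho.
  have e : N.+1 = (2 * N.+1./2).+1.
    by rewrite -[LHS]odd_double_half ho add1n mul2n.
  set m := N.+1./2 in e *.
  have [m0|mpos] := posnP m.
    have -> : N = 0 by lia.
    by rewrite prodP_recr // big_mkcond big_nat1.
  rewrite e (@big_cat_nat _ _ _ m.+2) //=; try lia.
  have h1 := IH m.+1 ltac:(lia).
  have h2 : \prod_(m.+2 <= p < (2 * m).+2 | prime p) p <= 4 ^ m.
    apply: leq_trans (bin_mid_le m); apply: dvdn_leq; first by rewrite bin_gt0; lia.
    by apply: prod_dvd_bin; lia.
  apply: leq_trans (leq_mul h1 h2) _; rewrite -expnD; apply: eq_leq; congr (_ ^ _); lia.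
rewrite prodP_recr //; case: ifP => pN; last first.
  by apply: leq_trans (IH N (leqnn N)) _; rewrite leq_exp2l.
have N1 : N.+1 = 2.
  by case: (even_prime pN) => // oN; rewrite oN in ho.
have -> : N = 1 by lia.
by rewrite !prodP_recr //= big_geq.
Qed.

Import Order.TTheory GRing.Theory Num.Theory.
Local Open Scope ring_scope.

Section RealPart.
Variable R : realType.

Lemma powRE (a x : R) : 0 < a -> a `^ x = expR (x * ln a).
Proof. by move=> a0; rewrite /powR gt_eqF. Qed.

Lemma theta_le N : \sum_(0 <= p < N.+1 | prime p) ln (p%:R : R) <= N%:R * ln 4.
Proof.
rewrite -ler_expR expR_sum.
rewrite (eq_bigr (fun p => (p%:R : R))); last first.
  by move=> p pp; rewrite lnK // posrE ltr0n prime_gt0.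
rewrite -natr_prod expRM_natl lnK ?posrE // -natrX ler_nat.
exact: prod_primes_le.
Qed.


Definition Fg (s : R) (p : nat) : R := p%:R `^ s / p%:R * ln (p%:R : R).

Lemma Fg_ge0 s p : (0 <= p)%N -> 0 <= Fg s p.
Proof.
move=> _; rewrite /Fg; case: p => [|p]; first by rewrite ln0 // mulr0.
by rewrite mulr_ge0 ?divr_ge0 ?powR_ge0 ?ln_ge0 // ler1n.
Qed.

Lemma block_le s (hs : 0 < s) N :
  \sum_(N./2.+1 <= p < N.+1 | prime p) Fg s p <= 2 * ln 4 * N%:R `^ s.
Proof.
have [->|Npos] := posnP N.
  by rewrite big_geq // mulr_ge0 ?powR_ge0 // mulr_ge0 // ln_ge0 // ler1n.
have N0 : (0 : R) < N%:R by rewrite ltr0n.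
apply: (@le_trans _ _ (\sum_(N./2.+1 <= p < N.+1 | prime p)
          (2 * N%:R `^ s / N%:R) * ln (p%:R : R))).
  rewrite big_nat_cond [X in _ <= X]big_nat_cond; apply: ler_sum => p /andP[/andP[lo hi] pp].
  have p0 : (0 : R) < p%:R by rewrite ltr0n prime_gt0.
  rewrite /Fg ler_wpM2r ?ln_ge0 ?ler1n ?prime_gt0 //.
  rewrite -mulrA [X in _ <= X]mulrC -mulrA.
  apply: ler_pM; rewrite ?powR_ge0 ?invr_ge0 ?(ltW p0) //.
    by apply: ge0_ler_powR; rewrite ?nnegrE ?ler_nat ?(ltW p0) ?(ltW N0) ?(ltW hs) //; lia.
  have h : (N%:R : R) <= 2 * p%:R by rewrite -natrM ler_nat; lia.
  rewrite -subr_ge0.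
  have -> : N%:R^-1 * 2 - p%:R^-1 = (2 * p%:R - N%:R) / (N%:R * p%:R) :> R.
    by field; rewrite !gt_eqF.
  by rewrite divr_ge0 ?subr_ge0 // mulr_ge0 // ltW.
rewrite -mulr_sumr.
have L4 : (0:R) <= ln 4 by rewrite ln_ge0 // ler1n.

apply: (@le_trans _ _ (2 * N%:R `^ s / N%:R * (N%:R * ln 4))).
  rewrite ler_wpM2l ?mulr_ge0 ?invr_ge0 ?powR_ge0 ?(ltW N0) //.
  apply: le_trans _ (theta_le N).
  rewrite [X in _ <= X](@big_cat_nat _ _ _ N./2.+1) //=; try lia.
  by rewrite lerDr; apply: sumr_ge0 => p pp; rewrite ln_ge0 // ler1n prime_gt0.
by rewrite le_eqVlt; apply/orP; left; apply/eqP; field; rewrite gt_eqF.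
Qed.


Lemma Sg_le s (hs : 0 < s) : exists K : R, 0 <= K /\
  forall N, \sum_(0 <= p < N.+1 | prime p) Fg s p <= K * N%:R `^ s.
Proof.
set q := (2^-1 : R) `^ s.
have q0 : 0 <= q by apply: powR_ge0.
have q1 : q < 1.
  rewrite /q powRE ?invr_gt0 //.
  apply: (@lt_le_trans _ _ (expR 0)); last by rewrite expR0.
  rewrite ltr_expR lnV ?posrE // mulrN oppr_lt0.
  by rewrite mulr_gt0 // ln_gt0 //; lra.
have L4 : (0:R) <= ln 4 by rewrite ln_ge0 // ler1n.
set K := 2 * ln 4 / (1 - q).
have K0 : 0 <= K by rewrite divr_ge0 ?mulr_ge0 // subr_ge0 ltW.
have hK : K * q + 2 * ln 4 = K.
  by rewrite /K; field; apply/eqP => h; lra.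
exists K; split => // N.
elim/ltn_ind: N => N IH.
have [->|Npos] := posnP N.
  by rewrite big_mkcond big_nat1 /= mulr_ge0 // powR_ge0.
rewrite (@big_cat_nat _ _ _ N./2.+1) //=; try lia.
have h1 := IH N./2 ltac:(lia).
have h2 := block_le s hs N.
have hA : (N./2)%:R `^ s <= q * N%:R `^ s.
  rewrite /q -powRM ?invr_ge0 //; apply: ge0_ler_powR; rewrite ?nnegrE ?(ltW hs) //.
  have h : ((N./2 * 2)%N%:R : R) <= N%:R by rewrite ler_nat; lia.
  rewrite natrM in h; lra.
have hB : 0 <= N%:R `^ s by apply: powR_ge0.
nra.
Qed.


Lemma term_eq (b u M : R) : 0 < u -> 0 < M ->
  u `^ (- (1/2)) * (M / u) `^ b =
  M `^ (1/2) * (expR ((1/2 - b) * (ln u - ln M)) / u).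
Proof.
move=> u0 M0.
rewrite !powRE ?divr_gt0 // lnM ?posrE ?invr_gt0 // lnV ?posrE //.
have -> : u^-1 = expR (- ln u) by rewrite expRN lnK.
rewrite -!expRD.
by congr expR; field.
Qed.

Lemma term_bound e (he : 0 < e) (u M : R) : 2 <= u -> u <= M ->
  expR (e * (ln u - ln M)) / u * ln M <=
  expR (- (e * ln M)) * (u `^ e / u * ln u) +
  2 / (e * ln 2) * (expR (- (e / 2 * ln M)) * (u `^ (e / 2) / u * ln u)).
Proof.
move=> u2 uM.
have u0 : 0 < u by lra.
have M0 : 0 < M by lra.
rewrite !powRE //.
set lu := ln u; set lM := ln M.
have l2 : 0 < ln (2 : R) by rewrite ln_gt0 //; lra.
have l2u : ln (2 : R) <= lu by rewrite /lu ler_ln ?posrE //; lra.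
have tge0 : 0 <= lM - lu by rewrite subr_ge0 /lu /lM ler_ln ?posrE.
set t := lM - lu.
set A := expR (e * (lu - lM)).
set Bh := expR (e / 2 * (lu - lM)).
have eA : expR (- (e * lM)) * expR (e * lu) = A by rewrite -expRD /A; congr expR; ring.
have eB : expR (- (e / 2 * lM)) * expR (e / 2 * lu) = Bh
  by rewrite -expRD /Bh; congr expR; ring.
have AB : A = Bh * Bh by rewrite /A /Bh -expRD; by congr expR; field.
have Bt : expR (e / 2 * t) * Bh = 1 by rewrite /Bh -expRD /t -expR0; by congr expR; field.
have B0 : 0 <= Bh by apply: expR_ge0.
have h1 : t * A <= 2 / e * Bh.
  have ht : e / 2 * t <= expR (e / 2 * t).
    apply: le_trans (expR_ge1Dx _); lra.
  have ht' : t <= 2 / e * expR (e / 2 * t).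
    rewrite -(@ler_pM2l _ (e / 2)) ?divr_gt0 //.
    by rewrite mulrA (_ : e / 2 * (2 / e) = 1) ?mul1r //; field; rewrite gt_eqF.
  rewrite AB mulrA.
  apply: (@le_trans _ _ (2 / e * expR (e / 2 * t) * Bh * Bh)).
    by rewrite ler_wpM2r // ler_wpM2r.
  by rewrite -(mulrA (2 / e)) Bt mulr1.
have h2 : Bh <= Bh * lu / ln 2.
  by rewrite ler_pdivlMr // ler_wpM2l.
have ui0 : 0 <= u^-1 by rewrite invr_ge0 ltW.
rewrite !(mulrA (expR _)) eA eB.
rewrite {1}(_ : lM = lu + t); last by rewrite /t; ring.
rewrite mulrDr lerD2l.
apply: (@le_trans _ _ (2 / e * Bh * u^-1)).
  rewrite (_ : A / u * t = t * A * u^-1); last by ring.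
  by rewrite ler_wpM2r.
apply: (@le_trans _ _ (2 / e * (Bh * lu / ln 2) * u^-1)).
  by rewrite ler_wpM2r // ler_wpM2l // divr_ge0 // ltW.
rewrite le_eqVlt; apply/orP; left; apply/eqP; field.
by rewrite !gt_eqF.
Qed.

End RealPart.
Arguments Fg {R}.

Theorem lemma2p1 (R : realType) (b c : R) (hb : b < 1 / 2) (hc : 0 < c) :
  exists C : R, forall f : R -> R,
    (forall x : R, 1 <= x -> f x <= c * x `^ b) ->
    forall N : nat, (2 <= N)%N ->
      \sum_(p < N.+1 | prime p) (p%:R `^ (- (1 / 2))) * f (N%:R / p%:R)
        <= C * N%:R `^ (1 / 2) / ln (N%:R : R).
Proof.
set e := 1 / 2 - b.
have he : 0 < e by rewrite /e; lra.
have he2 : 0 < e / 2 by rewrite divr_gt0.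
have [K1 [K10 HK1]] := @Sg_le R e he.
have [K2 [K20 HK2]] := @Sg_le R (e / 2) he2.
have l2 : 0 < ln (2 : R) by rewrite ln_gt0 //; lra.
set c2 := 2 / (e * ln (2 : R)).
have c20 : 0 <= c2 by rewrite /c2 divr_ge0 // mulr_ge0 // ltW.
set D := K1 + c2 * K2.
exists (c * D) => f hf N hN.
set M : R := N%:R.
have M1 : 1 < M by rewrite /M ltr1n.
have M0 : 0 < M by lra.
have lM0 : 0 < ln M by rewrite ln_gt0.
set W := fun p : nat => expR (e * (ln (p%:R : R) - ln M)) / p%:R.
have step1 : \sum_(p < N.+1 | prime p) p%:R `^ (- (1 / 2)) * f (N%:R / p%:R)
    <= \sum_(p < N.+1 | prime p) c * (M `^ (1/2) * W p).
  apply: ler_sum => p pp.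
  have p0 : (0 : R) < p%:R by rewrite ltr0n prime_gt0.
  have pN : (p%:R : R) <= M by rewrite /M ler_nat -ltnS ltn_ord.
  have h1 : 1 <= M / p%:R by rewrite ler_pdivlMr // mul1r.
  apply: (@le_trans _ _ (p%:R `^ (- (1 / 2)) * (c * (M / p%:R) `^ b))).
    by rewrite ler_wpM2l ?powR_ge0 // hf.
  by rewrite mulrCA term_eq.
apply: le_trans step1 _.
rewrite -mulr_sumr -mulr_sumr.
rewrite -(big_mkord (fun p => prime p) W).
have step2 : (\sum_(0 <= p < N.+1 | prime p) W p) * ln M <= D.
  rewrite mulr_suml.
  apply: (@le_trans _ _ (\sum_(0 <= p < N.+1 | prime p)
     (expR (- (e * ln M)) * Fg e p + c2 * (expR (- (e / 2 * ln M)) * Fg (e / 2) p)))).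
    rewrite big_nat_cond [X in _ <= X]big_nat_cond.
    apply: ler_sum => p /andP[/andP[_ hi] pp].
    apply: term_bound => //.
      by rewrite (_ : (2 : R) = 2%:R) // ler_nat prime_gt1.
    by rewrite /M ler_nat -ltnS.
  rewrite big_split /= -!mulr_sumr.
  have e1 : expR (- (e * ln M)) * M `^ e = 1.
    by rewrite powRE // -expRD addNr expR0.
  have e2 : expR (- (e / 2 * ln M)) * M `^ (e / 2) = 1.
    by rewrite powRE // -expRD addNr expR0.
  apply: lerD.
    apply: (@le_trans _ _ (expR (- (e * ln M)) * (K1 * M `^ e))).
      by rewrite ler_wpM2l ?expR_ge0 // HK1.
    by rewrite mulrCA e1 mulr1.
  rewrite ler_wpM2l //.
  apply: (@le_trans _ _ (expR (- (e / 2 * ln M)) * (K2 * M `^ (e / 2)))).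
    by rewrite ler_wpM2l ?expR_ge0 // HK2.
  by rewrite mulrCA e2 mulr1.
have step3 : \sum_(0 <= p < N.+1 | prime p) W p <= D / ln M.
  by rewrite ler_pdivlMr.
rewrite (_ : c * D * M `^ (1 / 2) / ln M = c * (M `^ (1 / 2) * (D / ln M))); last by ring.
by rewrite ler_wpM2l ?(ltW hc) // ler_wpM2l ?powR_ge0.
Qed.
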